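(* Let $\{F_i\}_{i=0}^n$ be a $\Delta(n,c)$ basis, let $a_0,\dots,a_n\in\mathbb{C}$, $p(x)=\sum_{i=0}^n a_iF_i(x)$, and suppose $p^{(j)}(c)=0$ for $j=0,\dots,\mu-1$, where $\mu\ge1$. (i) For every finite $\mathcal{D}\subseteq\mathbb{Z}$ with weight $w$ and orthonormal polynomials $g_0,g_1,\dots$ such that $w\succ p$, and every $s\in\mathcal{D}$, $$w(s)^2\sum_{i\in\mathcal{D}}\frac{|a_i|^2}{w(i)}\ \ge\ |a_s|^2\left(\sum_{j=\mu}^N g_j(s)^2\right)^{-1},$$ where $N=\deg A_w$. (ii) Let $s\in\{0,\dots,n\}$, $r=\lfloor(\mu-1)/2\rfloor$, and let $\mathcal{D}\subseteq\mathbb{Z}$ with weight $w$ be such that $s\notin\mathcal{D}$, the orthonormal polynomials $g_0,\dots,g_r$ exist (in particular $|\mathcal{D}|\ge r+1$ and $\sum_{x\in\mathcal D}w(x)|x|^{k}<\infty$ for $k\le 2r$), and $w\succ p-a_sF_s$ (i.e. $a_i=0$ for every $i\notin\mathcal{D}\cup\{s\}$). Then $$\max_{k\in\mathcal{D}}\frac{|a_k|}{w(k)}\ \ge\ |a_s|\sum_{j=0}^{r} g_j(s)^2.$$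
   Context: $\mathcal{P}^m$ denotes the set of complex polynomials of degree at most $m$. A sequence $F_0,\dots,F_n$ of functions analytic in an open disc centered at $c\in\mathbb{C}$ is a $\Delta(n,c)$ basis if there are polynomials $R_0,\dots,R_n$ with $\deg R_j=j$ (so $R_0,\dots,R_k$ form a basis of $\mathcal{P}^k$ for each $k\le n$) such that $F_i^{(j)}(c)=R_j(i)$ for all $i,j\in\{0,1,\dots,n\}$. For $\mathcal{D}\subseteq\mathbb{Z}$ and a weight $w:\mathbb{Z}\to[0,\infty)$ with $w(x)>0$ iff $x\in\mathcal{D}$, $g_0,g_1,\dots$ (with $\deg g_i=i$, real coefficients; for finite $\mathcal{D}$ only $g_0,\dots,g_{|\mathcal{D}|-1}$) denote the orthonormal polynomials: $\sum_{x\in\mathcal{D}}w(x)g_i(x)g_j(x)=\delta_{ij}$. For an expansion $\sum_i a_iF_i$ we write $w\succ \sum_i a_iF_i$ if $\{i: a_i\neq 0\}\subseteq\mathcal{D}$; for finite $\mathcal{D}$, setting $a_i=0$ for $i\in\mathcal{D}\setminus\{0,\dots,n\}$, $A_w$ denotes the polynomial of least degree with $A_w(i)=a_i/w(i)$ for all $i\in\mathcal{D}$. *)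

(* Defs.v *)
From HB Require Import structures.
From mathcomp Require Import all_boot all_order all_algebra.
From mathcomp Require Import all_classical all_reals all_analysis.
From mathcomp Require Import complex.
Set Implicit Arguments. Unset Strict Implicit. Unset Printing Implicit Defensive.
Import Order.TTheory GRing.Theory Num.Theory.
Import numFieldNormedType.Exports.
Local Open Scope ring_scope.
Local Open Scope classical_set_scope.

(* C = R[i] as a normed module over itself (complex modulus), so that
   complex derivatives (derive1 / derivable over R[i]) make sense. *)
HB.instance Definition _ (R : realType) := PseudoPointedMetric.copy R[i] (R[i])^o.
HB.instance Definition _ (R : realType) := GRing.ComAlgebra.copy R[i] (R[i])^o.
HB.instance Definition _ (R : realType) := Vector.copy R[i] (R[i])^o.
HB.instance Definition _ (R : realType) := NormedModule.copy R[i] (R[i])^o.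

Definition cmod (R : realType) (z : R[i]) : R := complex.Re `|z|.

Definition analytic_in_disc (R : realType) (F : R[i] -> R[i]) (c : R[i])
    (rho : R) : Prop :=
  0 < rho /\
  (forall (k : nat) (z : R[i]), cmod (z - c) < rho ->
      derivable (derive1n k F) z 1) /\
  (forall z : R[i], cmod (z - c) < rho ->
      (fun N : nat => \sum_(k < N) (derive1n k F c / (k`!)%:R * (z - c) ^+ k))
        @ \oo --> F z).

Definition Delta_basis (R : realType) (n : nat) (c : R[i])
    (F : nat -> R[i] -> R[i]) : Prop :=
  (exists rho : R, forall i, (i <= n)%N -> analytic_in_disc (F i) c rho) /\
  exists Rp : nat -> {poly R[i]},
    (forall j, (j <= n)%N -> size (Rp j) = j.+1) /\
    (forall i j, (i <= n)%N -> (j <= n)%N ->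
       derive1n j (F i) c = (Rp j).[i%:R]).

Definition aext (R : realType) (n : nat) (a : nat -> R[i]) (x : int) : R[i] :=
  match x with
  | Posz k => if (k <= n)%N then a k else 0
  | Negz _ => 0
  end.

Definition is_weight (R : realType) (D : int -> Prop) (w : int -> R) : Prop :=
  (forall x, 0 <= w x) /\ (forall x, 0 < w x <-> D x).

(* Sum over a possibly infinite D \subseteq Z: absolutely convergent,
   with value l (limit of the partial sums over D \cap [-M, M]). *)
Definition zpartial (R : realType) (D : int -> Prop) (f : int -> R) (M : nat) : R :=
  \sum_(k < (M + M).+1 | `[< D (k%:Z - M%:Z) >]) f (k%:Z - M%:Z).

Definition sum_over_eq (R : realType) (D : int -> Prop) (f : int -> R) (l : R) : Prop :=
  (exists B : R, forall M, zpartial D (fun x => `|f x|) M <= B) /\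
  (zpartial D f @ \oo --> l).

Definition orthonormal_upto (R : realType) (D : int -> Prop) (w : int -> R)
    (g : nat -> {poly R}) (m : nat) : Prop :=
  (forall i, (i <= m)%N -> size (g i) = i.+1) /\
  (forall i j, (i <= m)%N -> (j <= m)%N ->
     sum_over_eq D (fun x => w x * (g i).[x%:~R] * (g j).[x%:~R])
                 (if i == j then 1 else 0)).

(* Finite D (a duplicate-free list of integers): g_0, ..., g_{|D|-1}
   orthonormal for w on D. *)
Definition orthonormal_fin (R : realType) (D : seq int) (w : int -> R)
    (g : nat -> {poly R}) : Prop :=
  (forall i, (i < size D)%N -> size (g i) = i.+1) /\
  (forall i j, (i < size D)%N -> (j < size D)%N ->
     \sum_(x <- D) w x * (g i).[x%:~R] * (g j).[x%:~R] = if i == j then 1 else 0).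

Definition lincomb (R : realType) (n : nat) (a : nat -> R[i])
    (F : nat -> R[i] -> R[i]) : R[i] -> R[i] :=
  fun z => \sum_(i < n.+1) a i * F i z.

(* Main.v *)
Require Import Defs.
From HB Require Import structures.
From mathcomp Require Import all_boot all_order all_algebra.
From mathcomp Require Import all_classical all_reals all_analysis.
From mathcomp Require Import complex.
From mathcomp Require Import zify ring.
Import Order.TTheory GRing.Theory Num.Theory.
Import numFieldNormedType.Exports.
Local Open Scope ring_scope.
Local Open Scope classical_set_scope.
Section S.
Variable R : realType.
Implicit Types z : R[i].

Lemma cmodE z : (cmod z)%:C%C = `|z|.
Proof. by rewrite /cmod normc_def. Qed.

Lemma cmod_ge0 z : 0 <= cmod z.
Proof. by rewrite -ler0c cmodE. Qed.

Lemma cmodM z1 z2 : cmod (z1 * z2) = cmod z1 * cmod z2.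
Proof. by apply: complexI; rewrite rmorphM /= !cmodE normrM. Qed.

Lemma cmodD z1 z2 : cmod (z1 + z2) <= cmod z1 + cmod z2.
Proof. by rewrite -lecR rmorphD /= !cmodE ler_normD. Qed.

Lemma cmodB z1 z2 : cmod (z1 - z2) = cmod (z2 - z1).
Proof. by apply: complexI; rewrite !cmodE distrC. Qed.

Lemma cmodR (r : R) : cmod r%:C%C = `|r|.
Proof. apply: complexI; rewrite cmodE normc_def /=. 
by rewrite expr0n /= addr0 sqrtr_sqr. Qed.

Lemma cmod_eq0 z : (cmod z == 0) = (z == 0).
Proof. by rewrite -(inj_eq (@complexI _)) cmodE normr_eq0. Qed.

Lemma cmod0 : cmod (0 : R[i]) = 0.
Proof. by rewrite /cmod normr0. Qed.

Lemma cmod_sum (I : Type) (r : seq I) (f : I -> R[i]) :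
  cmod (\sum_(i <- r) f i) <= \sum_(i <- r) cmod (f i).
Proof.
elim: r => [|x r IH]; first by rewrite !big_nil cmod0.
rewrite !big_cons; apply: le_trans (cmodD _ _) _; by rewrite lerD2l.
Qed.
Lemma near_disc (c z : R[i]) (rho : R) : cmod (z - c) < rho ->
  \forall y \near z, cmod (y - c) < rho.
Proof.
move=> hz; rewrite -nbhs_nearE; rewrite nbhs_ballP.
exists ((rho - cmod (z - c))%:C%C).
  by rewrite /= (_ : 0 = (0:R)%:C%C) // ltcR subr_gt0.
move=> y /=; rewrite -ball_normE /= -cmodE ltcR => hy.
have -> : y - c = (y - z) + (z - c) by rewrite addrA subrK.
apply: le_lt_trans (cmodD _ _) _; rewrite cmodB -ltrBrDr //.
Qed.

Lemma Dlin n (c : R[i]) F (a : nat -> R[i]) rho :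
  (forall i, (i <= n)%N -> analytic_in_disc (F i) c rho) ->
  forall j z, cmod (z - c) < rho ->
  derive1n j (lincomb n a F) z = \sum_(i < n.+1) a i * derive1n j (F i) z.
Proof.
move=> hF; elim=> [|j IH] z hz; first by [].
rewrite derive1nS derive1E.
under eq_bigr do rewrite derive1nS derive1E.
set G := \sum_(i < n.+1) (a i \*: derive1n j (F i)).
have eqG : \forall y \near z, derive1n j (lincomb n a F) y = G y.
  near=> y; rewrite IH; last by near: y; exact: near_disc.
  by rewrite /G fct_sumE.
rewrite (@near_eq_derive _ _ _ _ _ z 1 eqG) /G derive_sum => [|i]; last first.
  apply: derivableZ; have [_ [hd _]] := hF i (ltn_ord i); exact: hd.
apply: eq_bigr => i _; rewrite deriveZ //.
have [_ [hd _]] := hF i (ltn_ord i); exact: hd.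
Unshelve. all: by end_near.
Qed.
End S.


Lemma tri_basis (K : fieldType) (P : nat -> {poly K}) m :
  (forall j, (j < m)%N -> size (P j) = j.+1) ->
  forall q : {poly K}, (size q <= m)%N ->
  exists b : nat -> K, q = \sum_(j < m) b j *: P j.
Proof.
elim: m => [|m IH] hP q hq.
  by exists (fun _ => 0); rewrite big_ord0; apply/size_poly_leq0P.
have hPm : size (P m) = m.+1 by apply: hP.
have lc : (P m)`_m != 0.
  have := lead_coef_eq0 (P m); rewrite lead_coefE hPm /= => ->.
  by rewrite -size_poly_eq0 hPm.
set k := q`_m / (P m)`_m.
have hq' : (size (q - k *: P m)%R <= m)%N.
  apply/leq_sizeP => j hj; rewrite coefB coefZ.
  case: (ltngtP j m) hj => // [hjm _|-> _]; last by rewrite /k -mulrA mulVf // mulr1 subrr.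
  rewrite (leq_sizeP _ _ hq j hjm) (leq_sizeP _ _ (eq_leq hPm) j hjm).
  by rewrite mulr0 subr0.
have [b hb] := IH (fun j hj => hP j (ltnW hj)) _ hq'.
exists (fun j => if j == m then k else b j).
rewrite big_ord_recr /= eqxx -[q](subrK (k *: P m)) hb; congr (_ + _).
by apply: eq_bigr => i _; rewrite ifN // neq_ltn ltn_ord.
Qed.

Lemma key_ident (R : realType) n (c : R[i]) F (a : nat -> R[i]) mu :
  Delta_basis n c F ->
  (forall j : nat, (j < mu)%N -> derive1n j (lincomb n a F) c = 0) ->
  forall q : {poly R[i]}, (size q <= mu)%N ->
  \sum_(i < n.+1) a i * q.[i%:R] = 0.
Proof.
move=> [[rho hrho] [Rp [hsz hder]]] hmu.
have hz : cmod (c - c) < rho.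
  by rewrite subrr cmod0; have [] := hrho 0%N isT.
have h4a : forall j, (j <= n)%N -> (j < mu)%N ->
    \sum_(i < n.+1) a i * (Rp j).[i%:R] = 0.
  move=> j jn jmu; rewrite -[RHS](hmu j jmu) (@Dlin R n c F a rho hrho j c hz).
  by apply: eq_bigr => i _; rewrite hder // -ltnS.
have hsmall : forall q : {poly R[i]}, (size q <= minn mu n.+1)%N ->
    \sum_(i < n.+1) a i * q.[i%:R] = 0.
  move=> q hq.
  have [|b ->] := @tri_basis _ Rp (minn mu n.+1) _ q hq.
    by move=> j; rewrite leq_min => /andP[_ jn]; apply: hsz.
  under eq_bigr do rewrite horner_sum mulr_sumr.
  rewrite exchange_big big1 // => j _.
  under eq_bigr do rewrite hornerZ mulrCA.
  have := ltn_ord j; rewrite leq_min => /andP[jm jn].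
  by rewrite -mulr_sumr h4a ?mulr0.
move=> q hq; case: (leqP mu n) => hmun.
  by apply: hsmall; rewrite (minn_idPl (leqW hmun)).
have a0 : forall i0 : 'I_n.+1, a i0 = 0.
  move=> i0; set s := rem (nat_of_ord i0) (iota 0 n.+1).
  have ui : uniq (iota 0 n.+1) by apply: iota_uniq.
  have i0in : nat_of_ord i0 \in iota 0 n.+1 by rewrite mem_iota leq0n add0n ltn_ord.
  pose p := \prod_(k <- s) ('X - (k%:R : R[i])%:P).
  have hp : (size p <= minn mu n.+1)%N.
    rewrite size_prod_XsubC size_rem // size_iota leq_min /=; apply/andP; split => //.
  have := hsmall p hp.
  rewrite (bigD1 i0) //= big1 ?addr0 => [/eqP|i ii0].
    rewrite mulf_eq0 => /orP[/eqP //|].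
    rewrite horner_prod prodf_seq_eq0 => /hasP[k].
    rewrite mem_rem_uniq // inE => /andP[ki0 _] /=.
    by rewrite hornerXsubC subr_eq0 eqr_nat eq_sym (negPf ki0).
  rewrite horner_prod (big_rem (nat_of_ord i)) /=.
    by rewrite hornerXsubC subrr mul0r mulr0.
  by rewrite mem_rem_uniq // inE mem_iota /= ltn_ord andbT.
by apply: big1 => i _; rewrite a0 mul0r.
Qed.


Lemma cmodN (R : realType) (z : R[i]) : cmod (- z) = cmod z.
Proof. by apply: complexI; rewrite !cmodE normrN. Qed.

Lemma cvg_sumR (R : realType) (I : Type) (r : seq I) (f : I -> nat -> R)
    (l : I -> R) :
  (forall i, f i @ \oo --> l i) ->
  (fun N => \sum_(i <- r) f i N) @ \oo --> \sum_(i <- r) l i.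
Proof.
move=> hf; elim: r => [|x r IH].
  by rewrite big_nil; under eq_fun do rewrite big_nil; exact: cvg_cst.
rewrite big_cons; under eq_fun do rewrite big_cons.
exact: cvgD.
Qed.

Lemma zpartial_sum (R : realType) D (I : Type) (r : seq I) (h : I -> int -> R) M :
  zpartial D (fun x => \sum_(i <- r) h i x) M = \sum_(i <- r) zpartial D (h i) M.
Proof. by rewrite /zpartial exchange_big. Qed.

Lemma zpartial_scale (R : realType) D (k : R) (h : int -> R) M :
  zpartial D (fun x => k * h x) M = k * zpartial D h M.
Proof. by rewrite /zpartial mulr_sumr. Qed.

Lemma zpartial_ge (R : realType) (D : int -> Prop) (f : int -> R) :
  (forall x, 0 <= f x) -> (forall x, ~ D x -> f x = 0) ->
  forall n M, (n <= M)%N -> \sum_(i < n.+1) f i%:Z <= zpartial D f M.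
Proof.
move=> f0 fD n M nM; rewrite /zpartial [X in _ <= X]big_mkcond /=.
rewrite [X in _ <= X](_ : _ = \sum_(k < (M+M).+1) f (k%:Z - M%:Z)); last first.
  apply: eq_bigr => k _; case: asboolP => // nD; by rewrite fD.
rewrite -(big_mkord xpredT (fun k => f (k%:Z - M%:Z))).
rewrite (@big_cat_nat _ _ _ M 0 (M+M).+1) //; last by rewrite leqW ?leq_addr.
rewrite (@big_cat_nat _ _ _ (M + n.+1) M (M+M).+1) ?leq_addr //; last first.
  by rewrite addnS ltnS leq_add2l.
simpl.
rewrite ler_wpDl ?sumr_ge0 // ler_wpDr ?sumr_ge0 //.
rewrite -{1}[M]add0n big_addn addKn big_mkord.
rewrite le_eqVlt; apply/orP; left; apply/eqP; apply: eq_bigr => i _; congr f.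
by rewrite PoszD addrK.
Qed.


Lemma cmod_sum_cond (R : realType) (I : Type) (r : seq I) (P : pred I) (f : I -> R[i]) :
  cmod (\sum_(i <- r | P i) f i) <= \sum_(i <- r | P i) cmod (f i).
Proof.
rewrite big_mkcond [X in _ <= X]big_mkcond; apply: le_trans (cmod_sum _ _ _ _) _.
by apply: ler_sum => i _; case: (P i) => //; rewrite cmod0.
Qed.

Lemma part2 (R : realType) (n : nat) (c : R[i])
    (F : nat -> R[i] -> R[i]) (a : nat -> R[i]) (mu : nat) :
  Delta_basis n c F ->
  (1 <= mu)%N ->
  (forall j : nat, (j < mu)%N -> derive1n j (lincomb n a F) c = 0) ->
  (forall (s : nat) (D : int -> Prop) (w : int -> R) (g : nat -> {poly R}),
     (s <= n)%N ->
     ~ D s%:Z ->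
     is_weight D w ->
     orthonormal_upto D w g (mu.-1)./2 ->
     (forall i : nat, (i <= n)%N -> i != s -> a i != 0 -> D i%:Z) ->
     sup [set cmod (aext n a k) / w k | k in D] >=
       cmod (a s) * \sum_(0 <= j < ((mu.-1)./2).+1) (g j).[s%:R] ^+ 2).
Proof.
move=> hDelta hmu1 hder s D w g sn nDs [w0 wpos] [gsz gorth] hsupp.
set r := (mu.-1)./2.
set t := fun j => (g j).[s%:R].
set T := \sum_(0 <= j < r.+1) _.
have wD : forall x, ~ D x -> w x = 0.
  move=> x nD; have := w0 x; rewrite le_eqVlt => /orP[/eqP-> // | /wpos hD]; by case: nD.
pose K : {poly R} := \sum_(j < r.+1) t j *: g j.
have Kx : forall x, K.[x] = \sum_(j < r.+1) t j * (g j).[x].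
  by move=> x; rewrite horner_sum; apply: eq_bigr => j _; rewrite hornerZ.
have KS : K.[s%:R] = T.
  by rewrite Kx /T big_mkord; apply: eq_bigr => j _; rewrite expr2.
have T0 : 0 <= T by rewrite sumr_ge0 // => j _; rewrite sqr_ge0.
have hsizeK : (size K <= r.+1)%N.
  apply/leq_sizeP => k hk; rewrite coef_sum big1 // => j _.
  have hg : (size (g j) <= r.+1)%N by rewrite gsz // -ltnS.
  by rewrite coefZ (leq_sizeP _ _ hg k hk) mulr0.
have hsizeK2 : (size (K * K)%R <= mu)%N.
  apply: leq_trans (size_mul_leq _ _) _.
  have E := odd_double_half mu.-1; rewrite -/r -addnn in E.
  have E2 := prednK hmu1.
  move: hsizeK; set z := size K => hz.
  have : (odd mu.-1 <= 1)%N by case: odd.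
  lia.
have key := @key_ident R n c F a mu hDelta hder
  (map_poly (real_complex R) (K * K)).
rewrite size_map_poly in key; have {key hsizeK2} key := key hsizeK2.
have Kc : forall i : nat, (map_poly (real_complex R) (K * K)).[i%:R] =
    ((K.[i%:R]) ^+ 2)%:C%C.
  move=> i; have -> : (i%:R : R[i]) = (i%:R : R)%:C%C by rewrite rmorph_nat.
  by rewrite horner_map /= hornerM expr2.
have sn' : (s < n.+1)%N by [].
set o := Ordinal sn'.
have key' : \sum_(i < n.+1) a i * ((K.[i%:R]) ^+ 2)%:C%C = 0.
  by rewrite -[RHS]key; apply: eq_bigr => i _; rewrite Kc.
rewrite (bigD1 o) //= KS in key'.
have key2 : a s * (T ^+ 2)%:C%C =
    - \sum_(i < n.+1 | i != o) a i * ((K.[i%:R]) ^+ 2)%:C%C.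
  by apply/eqP; rewrite -addr_eq0 key'.
have hineq : cmod (a s) * T ^+ 2 <=
    \sum_(i < n.+1 | i != o) cmod (a i) * K.[i%:R] ^+ 2.
  have := congr1 (@cmod R) key2.
  rewrite cmodN cmodM cmodR ger0_norm ?sqr_ge0 // => ->.
  apply: le_trans (cmod_sum_cond _ _ _ _ _) _.
  by apply: ler_sum => i _; rewrite cmodM cmodR ger0_norm ?sqr_ge0.
set S := [set cmod (aext n a k) / w k | k in D].
have hB0 : 0 <= \sum_(i < n.+1) cmod (a i) / w i%:Z.
  by apply: sumr_ge0 => i _; rewrite divr_ge0 ?cmod_ge0.
have hub : has_ubound S.
  exists (\sum_(i < n.+1) cmod (a i) / w i%:Z) => y [k Dk <-].
  case: k Dk => [i|m] Dk /=; last by rewrite cmod0 mul0r.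
  case: ifP => iN; last by rewrite cmod0 mul0r.
  rewrite (bigD1 (Ordinal (iN : (i < n.+1)%N))) //= ler_wpDr //.
  by apply: sumr_ge0 => j _; rewrite divr_ge0 ?cmod_ge0.
have ubS : forall y, S y -> y <= sup S.
  by move=> y Sy; have := ub_le_sup hub; apply.
have hDne : exists x, D x.
  case: (pselect (exists x, D x)) => // hne.
  have [_ hcv] := gorth 0 0 (leq0n _) (leq0n _).
  rewrite eqxx in hcv.
  have Z : zpartial D (fun x : int => w x * (g 0%N).[x%:~R] * (g 0%N).[x%:~R]) = fun=> 0.
    apply: funext => M; rewrite /zpartial big_pred0 // => k.
    by rewrite asboolF // => hk; apply: hne; eexists; exact hk.
  rewrite Z in hcv; have := cvg_lim (@Rhausdorff R) hcv.
  by rewrite lim_cst // => h; have := @oner_eq0 R; rewrite -h eqxx.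
have hM0 : 0 <= sup S.
  have [x0 Dx0] := hDne.
  apply: le_trans (ubS _ (ex_intro2 _ _ x0 Dx0 erefl)).
  by rewrite divr_ge0 ?cmod_ge0.
have hb : forall i : 'I_n.+1, i != o -> cmod (a i) <= sup S * w i%:Z.
  move=> i hio; case: (eqVneq (a i) 0) => [->|ai0].
    by rewrite cmod0 mulr_ge0.
  have iN : (i <= n)%N by rewrite -ltnS ltn_ord.
  have is' : nat_of_ord i != s.
    by apply: contra hio => /eqP h; apply/eqP/val_inj.
  have Di := hsupp i iN is' ai0.
  have wi := (wpos i).2 Di.
  rewrite -ler_pdivrMr //; apply: ubS; exists i%:Z => //=.
  by rewrite iN.
have hA : cmod (a s) * T ^+ 2 <=
    sup S * \sum_(i < n.+1) w i%:Z * K.[i%:R] ^+ 2.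
  apply: le_trans hineq _.
  apply: le_trans (_ : _ <= \sum_(i < n.+1 | i != o)
      sup S * (w i%:Z * K.[i%:R] ^+ 2)) _.
    by apply: ler_sum => i hi; rewrite [X in _ <= X]mulrA; apply: ler_wpM2r; [exact: sqr_ge0 | exact: hb].
  rewrite -mulr_sumr; apply: ler_wpM2l => //; rewrite [X in _ <= X](bigD1 o) //=.
  by apply: ler_wpDl => //; rewrite mulr_ge0 ?sqr_ge0.
pose f := fun x : int => w x * K.[x%:~R] ^+ 2.
have fE : f = fun x => \sum_(j < r.+1) \sum_(l < r.+1)
    (t j * t l) * (w x * (g j).[x%:~R] * (g l).[x%:~R]).
  apply: funext => x; rewrite /f Kx expr2 mulr_suml mulr_sumr.
  apply: eq_bigr => j _; rewrite mulr_sumr mulr_sumr.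
  by apply: eq_bigr => l _; ring.
have hcv : zpartial D f @ \oo --> T.
  have -> : zpartial D f = fun M => \sum_(j < r.+1) \sum_(l < r.+1)
      (t j * t l) * zpartial D (fun x => w x * (g j).[x%:~R] * (g l).[x%:~R]) M.
    apply: funext => M; rewrite fE zpartial_sum; apply: eq_bigr => j _.
    by rewrite zpartial_sum; apply: eq_bigr => l _; rewrite zpartial_scale.
  have -> : T = \sum_(j < r.+1) \sum_(l < r.+1)
      (t j * t l) * (if nat_of_ord j == nat_of_ord l then 1 else 0).
    rewrite /T big_mkord; apply: eq_bigr => j _.
    rewrite (bigD1 j) //= eqxx mulr1 big1 ?addr0 ?expr2 // => l hl.
    by rewrite ifN ?mulr0 // eq_sym.
  apply: cvg_sumR => j; apply: cvg_sumR => l.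
  apply: cvgM; first exact: cvg_cst.
  exact: (gorth j l (ltn_ord j) (ltn_ord l)).2.
have hL : \sum_(i < n.+1) w i%:Z * K.[i%:R] ^+ 2 <= T.
  rewrite -(cvg_lim (@Rhausdorff R) hcv).
  apply: limr_ge; first by apply/cvg_ex; exists T.
  near=> M; apply: (@zpartial_ge R D f _ _ n M).
  - by move=> x; rewrite /f mulr_ge0 ?sqr_ge0.
  - by move=> x nD; rewrite /f wD // mul0r.
  - by near: M; exact: nbhs_infty_ge.
case: (eqVneq T 0) => [->|Tne]; first by rewrite mulr0.
have Tp : 0 < T by rewrite lt_def Tne T0.
rewrite -(ler_pM2r Tp); apply: le_trans (ler_wpM2l hM0 hL).
by rewrite -mulrA -expr2.
Unshelve. all: by end_near.
Qed.


Lemma sum_support (V : nmodType) (T : eqType) (s1 s2 : seq T) (phi : T -> V) :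
  uniq s1 -> uniq s2 ->
  (forall x, phi x != 0 -> (x \in s1) && (x \in s2)) ->
  \sum_(x <- s1) phi x = \sum_(x <- s2) phi x.
Proof.
move=> u1 u2 hphi.
have E : forall t1 t2 : seq T, (forall x, phi x != 0 -> x \in t2) ->
    \sum_(x <- t1) phi x = \sum_(x <- [seq y <- t1 | y \in t2]) phi x.
  move=> t1 t2 h; rewrite big_filter [RHS]big_mkcond; apply: eq_bigr => x _.
  case: ifP => // /negbT nx; apply/eqP; apply: contraNT nx => /h.
  by [].
rewrite (E s1 s2) => [|x /hphi /andP[]//].
rewrite [RHS](E s2 s1) => [|x /hphi /andP[]//].
apply: perm_big; apply: uniq_perm; rewrite ?filter_uniq //.
by move=> x; rewrite !mem_filter andbC.
Qed.

Lemma size_sum_le (K : nzRingType) (T : Type) (r : seq T) (P : T -> {poly K}) N :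
  (forall x, (size (P x) <= N)%N) -> (size (\sum_(x <- r) P x)%R <= N)%N.
Proof.
move=> h; elim: r => [|x r IH]; first by rewrite big_nil size_poly0.
by rewrite big_cons; apply: leq_trans (size_add _ _) _; rewrite geq_max h IH.
Qed.

Lemma wCS (R : realType) (I : eqType) (r : seq I) (p q w : I -> R) :
  (forall i, i \in r -> 0 < w i) ->
  (\sum_(i <- r) p i * q i) ^+ 2 <=
  (\sum_(i <- r) p i ^+ 2 / w i) * (\sum_(i <- r) w i * q i ^+ 2).
Proof.
move=> wp.
set A := \sum_(i <- r) _ ^+ 2 / _; set B := \sum_(i <- r) _ * _;
set C := \sum_(i <- r) w i * _.
have C0 : 0 <= C by rewrite /C big_seq sumr_ge0 // => i /wp /ltW wi; rewrite mulr_ge0 ?sqr_ge0.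
have A0 : 0 <= A by rewrite /A big_seq sumr_ge0 // => i /wp wi; rewrite divr_ge0 ?sqr_ge0 ?ltW.
case: (eqVneq C 0) => [Ceq|Cne].
  have qz : forall i, i \in r -> q i = 0.
    move=> i ir; have : w i * q i ^+ 2 == 0.
      move: Ceq; rewrite /C big_seq => /eqP; rewrite psumr_eq0.
        by move=> /allP /(_ i ir) /implyP ->.
      by move=> j /wp /ltW wj; rewrite mulr_ge0 ?sqr_ge0.
    by rewrite mulf_eq0 sqrf_eq0 (gt_eqF (wp i ir)) /= => /eqP.
  have -> : B = 0 by rewrite /B big_seq big1 // => i /qz ->; rewrite mulr0.
  by rewrite Ceq expr0n /= mulr0.
have Cp : 0 < C by rewrite lt_def Cne C0.
set t := B / C.
have H : 0 <= \sum_(i <- r) (p i - t * w i * q i) ^+ 2 / w i.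
  by rewrite big_seq sumr_ge0 // => i /wp wi; rewrite divr_ge0 ?sqr_ge0 ?ltW.
have E : \sum_(i <- r) (p i - t * w i * q i) ^+ 2 / w i = A - 2 * t * B + t ^+ 2 * C.
  rewrite /A /B /C mulr_sumr mulr_sumr -sumrB -big_split /= big_seq.
  rewrite [RHS]big_seq; apply: eq_bigr => i /wp wi.
  by field; rewrite gt_eqF.
rewrite E in H.
have : 0 <= (A - 2 * t * B + t ^+ 2 * C) * C by rewrite mulr_ge0 // ltW.
have -> : (A - 2 * t * B + t ^+ 2 * C) * C = A * C - B ^+ 2.
  by rewrite /t; field; rewrite Cne.
by rewrite subr_ge0.
Qed.


Lemma size_sum_le_seq (K : nzRingType) (T : eqType) (r : seq T) (P : T -> {poly K}) N :
  (forall x, x \in r -> (size (P x) <= N)%N) -> (size (\sum_(x <- r) P x)%R <= N)%N.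
Proof.
move=> h; rewrite (eq_big_seq (fun x => if x \in r then P x else 0)).
  by apply: size_sum_le => x; case: ifP => xr; rewrite ?h ?size_poly0.
by move=> x xr; rewrite xr.
Qed.

Lemma interp_exists (R : realType) (D : seq int) (v : int -> R[i]) :
  uniq D -> exists B : {poly R[i]},
  (forall x, x \in D -> B.[x%:~R] = v x) /\ (size B <= size D)%N.
Proof.
move=> uD.
pose L x := \prod_(y <- rem x D) ('X - (y%:~R : R[i])%:P).
have LE : forall x x', (L x).[x'%:~R] = \prod_(y <- rem x D) (x'%:~R - y%:~R : R[i]).
  by move=> x x'; rewrite horner_prod; apply: eq_bigr => y _; rewrite hornerXsubC.
pose B := \sum_(x <- D) (v x / (L x).[x%:~R]) *: L x.
exists B; split.
  move=> x' hx'; rewrite horner_sum (bigD1_seq x') //= hornerZ big1_seq ?addr0.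
    rewrite -mulrA mulVf ?mulr1 // LE prodf_seq_neq0; apply/allP => y.
    rewrite mem_rem_uniq // inE => /andP[yx _] /=.
    by rewrite subr_eq0 eqr_int eq_sym.
  move=> x /andP[xx' xD]; rewrite hornerZ (LE x x') [X in _ * X](big_rem x') /=.
    by rewrite subrr mul0r mulr0.
  by rewrite mem_rem_uniq // inE eq_sym xx'.
apply: size_sum_le_seq => x xD.
apply: leq_trans (size_scale_leq _ _) _.
rewrite size_prod_XsubC size_rem // prednK // lt0n size_eq0; apply/eqP => D0.
by rewrite D0 in xD.
Qed.


Lemma mapE (R : realType) (p : {poly R}) (y : int) :
  (map_poly (real_complex R) p).[y%:~R] = (p.[y%:~R])%:C%C.
Proof. by rewrite -horner_map rmorph_int. Qed.

Lemma diag_sum (R : realType) (lo hi : nat) (t : nat -> R) :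
  \sum_(lo <= j < hi) \sum_(lo <= l < hi) t j * t l * (if j == l then 1 else 0)
  = \sum_(lo <= j < hi) t j ^+ 2.
Proof.
apply: eq_big_nat => j hj.
rewrite (bigD1_seq j) /= ?mem_index_iota ?iota_uniq // eqxx mulr1 big1 ?addr0 ?expr2 //.
by move=> l ljn; rewrite eq_sym (negPf ljn) mulr0.
Qed.

Lemma part1 (R : realType) (n : nat) (c : R[i])
    (F : nat -> R[i] -> R[i]) (a : nat -> R[i]) (mu : nat) :
  Delta_basis n c F ->
  (1 <= mu)%N ->
  (forall j : nat, (j < mu)%N -> derive1n j (lincomb n a F) c = 0) ->
  (forall (D : seq int) (w : int -> R) (g : nat -> {poly R}) (s : int),
     uniq D ->
     is_weight (fun x => x \in D) w ->
     orthonormal_fin D w g ->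
     (forall i : nat, (i <= n)%N -> a i != 0 -> (i%:Z \in D)) ->
     s \in D ->
     forall A : {poly R[i]},
       (forall x, x \in D -> A.[x%:~R] = aext n a x / (w x)%:C%C) ->
       (forall B : {poly R[i]},
          (forall x, x \in D -> B.[x%:~R] = aext n a x / (w x)%:C%C) ->
          (size A <= size B)%N) ->
       cmod (aext n a s) ^+ 2 <=
         w s ^+ 2 * (\sum_(x <- D) cmod (aext n a x) ^+ 2 / w x)
         * \sum_(mu <= j < (size A).-1.+1) (g j).[s%:~R] ^+ 2).
Proof.
move=> hDelta hmu1 hder D w g s uD [w0 wpos] [gsz gorth] hsupp sD A hA hAmin.
set al := aext n a.
have wD : forall x, x \in D -> 0 < w x by move=> x h; apply/(wpos x).2.
have wCne : forall x, x \in D -> (w x)%:C%C != 0.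
  by move=> x xD; rewrite fmorph_eq0 gt_eqF // wD.
have alA : forall x, x \in D -> al x = (w x)%:C%C * A.[x%:~R].
  by move=> x xD; rewrite hA // mulrC divfK // wCne.
have sumD : forall h : int -> R[i],
    \sum_(x <- D) al x * h x = \sum_(i < n.+1) a i * h i%:Z.
  move=> h; rewrite (@sum_support _ _ D (map Posz (iota 0 n.+1))) //.
  - rewrite big_map -(big_mkord xpredT (fun i => a i * h i%:Z)) /index_iota subn0.
    apply: eq_big_seq => i.
    by rewrite mem_iota /= add0n ltnS /al /= => ->.
  - by rewrite map_inj_uniq ?iota_uniq // => x y [].
  - move=> x; rewrite mulf_eq0 negb_or => /andP[ax _].
    case: x ax => [i|k]; rewrite /al; last by rewrite /aext eqxx.
    rewrite /aext; case: ifP => iN ai; last by rewrite eqxx in ai.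
    rewrite hsupp // andTb; apply/mapP; exists i => //.
    by rewrite mem_iota add0n ltnS iN.
pose cj j := \sum_(x <- D) al x * ((g j).[x%:~R])%:C%C.
have c0 : forall j, (j < mu)%N -> (j < size D)%N -> cj j = 0.
  move=> j jmu jD; rewrite /cj sumD.
  rewrite -[RHS](@key_ident R n c F a mu hDelta hder
     (map_poly (real_complex R) (g j))); last by rewrite size_map_poly gsz.
  by apply: eq_bigr => i _; rewrite (mapE _ _ i%:Z).
have [B [hB hBs]] := @interp_exists R D (fun x => al x / (w x)%:C%C) uD.
have hAs := leq_trans (hAmin B hB) hBs.
have Dpos : (0 < size D)%N.
  by rewrite lt0n size_eq0; apply/eqP => D0; rewrite D0 in sD.
set m := (size A).-1.+1.
have hAm : (size A <= m)%N by rewrite leqSpred.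
have hmD : (m <= size D)%N by rewrite /m; case: (size A) hAs => [_|k] //.
have [b hb] := @tri_basis _ (fun j => map_poly (real_complex R) (g j)) m
  (fun j hj => etrans (size_map_poly _ _) (gsz j (leq_trans hj hmD))) A hAm.
have Aev : forall y : int, A.[y%:~R] = \sum_(j < m) b j * ((g j).[y%:~R])%:C%C.
  by move=> y; rewrite hb horner_sum; apply: eq_bigr => j _; rewrite hornerZ mapE.
have bc : forall l, (l < m)%N -> b l = cj l.
  move=> l lm; rewrite /cj.
  rewrite (eq_big_seq (fun x => \sum_(j < m) b j *
      ((w x * (g j).[x%:~R] * (g l).[x%:~R])%:C%C))); last first.
    move=> x xD; rewrite alA // Aev mulr_sumr mulr_suml; apply: eq_bigr => j _.
    by rewrite !rmorphM /=; ring.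
  rewrite exchange_big /=.
  under eq_bigr do rewrite -mulr_sumr -rmorph_sum /=
    (gorth _ _ (leq_trans (ltn_ord _) hmD) (leq_trans lm hmD)).
  rewrite (bigD1 (Ordinal lm)) //= eqxx mulr1 big1 ?addr0 // => j hj.
  by rewrite ifN ?mulr0 //; apply: contra hj => /eqP h; apply/eqP/val_inj.
pose t j := (g j).[s%:~R].
have als : al s = (w s)%:C%C * \sum_(mu <= j < m) cj j * (t j)%:C%C.
  rewrite alA // Aev; congr (_ * _).
  rewrite -(big_mkord xpredT (fun j => b j * ((g j).[s%:~R])%:C%C)).
  case: (leqP mu m) => hm.
    rewrite (@big_cat_nat _ _ _ mu 0 m _ _ (leq0n mu) hm) /=.
    rewrite big_nat big1 ?add0r => [|j /andP[_ hj]]; last first.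
      by rewrite bc ?c0 ?mul0r //; [exact: leq_trans hj (leq_trans hm hmD) | exact: leq_trans hj hm].
    by apply: eq_big_nat => j /andP[_ hj]; rewrite bc.
  rewrite [RHS]big_geq ?(ltnW hm) // big_nat big1 // => j /andP[_ hj].
  by rewrite bc ?c0 ?mul0r //; [exact: ltn_trans hj hm | exact: leq_trans hj hmD].
pose Kx (x : int) := \sum_(mu <= j < m) t j * (g j).[x%:~R].
have KE : \sum_(mu <= j < m) cj j * (t j)%:C%C = \sum_(x <- D) al x * (Kx x)%:C%C.
  rewrite /cj; under eq_bigr do rewrite mulr_suml.
  rewrite exchange_big; apply: eq_bigr => x _; rewrite /Kx rmorph_sum mulr_sumr.
  by apply: eq_bigr => j _; rewrite rmorphM /=; ring.
have hX : cmod (al s) <= w s * \sum_(x <- D) cmod (al x) * `|Kx x|.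
  rewrite als KE cmodM cmodR ger0_norm ?w0 //; apply: ler_wpM2l; first exact: w0.
  apply: le_trans (cmod_sum _ _ _ _) _; apply: ler_sum => x _.
  by rewrite cmodM cmodR.
have hCS := @wCS R _ D (fun x => cmod (al x)) (fun x => `|Kx x|) w wD.
have hT : \sum_(x <- D) w x * `|Kx x| ^+ 2 = \sum_(mu <= j < m) t j ^+ 2.
  rewrite -diag_sum.
  rewrite (eq_bigr (fun x => \sum_(mu <= j < m) \sum_(mu <= l < m)
      t j * t l * (w x * (g j).[x%:~R] * (g l).[x%:~R]))); last first.
    move=> x _; rewrite real_normK ?num_real // /Kx expr2 mulr_suml mulr_sumr.
    apply: eq_bigr => j _; rewrite mulr_sumr mulr_sumr.
    by apply: eq_bigr => l _; ring.
  rewrite exchange_big; apply: eq_big_nat => j /andP[_ hj].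
  rewrite exchange_big; apply: eq_big_nat => l /andP[_ hl].
  rewrite -mulr_sumr gorth //; [exact: leq_trans hj hmD | exact: leq_trans hl hmD].
rewrite hT in hCS.
have hX2 : cmod (al s) ^+ 2 <= (w s * \sum_(x <- D) cmod (al x) * `|Kx x|) ^+ 2.
  by rewrite !expr2; apply: ler_pM => //; rewrite cmod_ge0.
apply: le_trans hX2 _; rewrite exprMn -mulrA; apply: ler_wpM2l.
  by rewrite sqr_ge0.
exact: hCS.
Qed.

Theorem theorem2 (R : realType) (n : nat) (c : R[i])
    (F : nat -> R[i] -> R[i]) (a : nat -> R[i]) (mu : nat) :
  Delta_basis n c F ->
  (1 <= mu)%N ->
  (forall j : nat, (j < mu)%N -> derive1n j (lincomb n a F) c = 0) ->
  (* (i) *)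
  (forall (D : seq int) (w : int -> R) (g : nat -> {poly R}) (s : int),
     uniq D ->
     is_weight (fun x => x \in D) w ->
     orthonormal_fin D w g ->
     (forall i : nat, (i <= n)%N -> a i != 0 -> (i%:Z \in D)) ->
     s \in D ->
     forall A : {poly R[i]},
       (forall x, x \in D -> A.[x%:~R] = aext n a x / (w x)%:C%C) ->
       (forall B : {poly R[i]},
          (forall x, x \in D -> B.[x%:~R] = aext n a x / (w x)%:C%C) ->
          (size A <= size B)%N) ->
       cmod (aext n a s) ^+ 2 <=
         w s ^+ 2 * (\sum_(x <- D) cmod (aext n a x) ^+ 2 / w x)
         * \sum_(mu <= j < (size A).-1.+1) (g j).[s%:~R] ^+ 2)
  /\
  (* (ii) *)
  (forall (s : nat) (D : int -> Prop) (w : int -> R) (g : nat -> {poly R}),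
     (s <= n)%N ->
     ~ D s%:Z ->
     is_weight D w ->
     orthonormal_upto D w g (mu.-1)./2 ->
     (forall i : nat, (i <= n)%N -> i != s -> a i != 0 -> D i%:Z) ->
     sup [set cmod (aext n a k) / w k | k in D] >=
       cmod (a s) * \sum_(0 <= j < ((mu.-1)./2).+1) (g j).[s%:R] ^+ 2).
Proof.
move=> hD hmu hder; split.
  exact: (@part1 R n c F a mu hD hmu hder).
exact: (@part2 R n c F a mu hD hmu hder).
Qed.
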